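(* The operator $\mathbf{V}\mapsto\mathbf{V}^{\mathsf{bar}}$ on the lattice of pseudovarieties of finite semigroups is continuous (order preserving and preserving directed joins), non-decreasing ($\mathbf{V}\subseteq\mathbf{V}^{\mathsf{bar}}$) and idempotent ($(\mathbf{V}^{\mathsf{bar}})^{\mathsf{bar}}=\mathbf{V}^{\mathsf{bar}}$). Further: (i) $\llbracket S\rrbracket^{\mathsf{bar}}=\llbracket S^{\mathsf{bar}}\rrbracket$ for every finite semigroup $S$; (ii) $\mathbf{RZ}\subseteq\mathbf{V}^{\mathsf{bar}}$ for every nontrivial pseudovariety $\mathbf{V}$. Consequently, if $\llbracket S\rrbracket=\llbracket T\rrbracket$ then $\llbracket S^{\mathsf{bar}}\rrbracket=\llbracket T^{\mathsf{bar}}\rrbracket$.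
   Context: All semigroups are finite. A pseudovariety is a class of finite semigroups closed under finite direct products, subsemigroups and homomorphic images; $\llbracket\mathscr{K}\rrbracket$ is the pseudovariety generated by a class $\mathscr{K}$. $\mathbf{RZ}$ is the pseudovariety of right zero semigroups ($xy=y$). For a semigroup $S$, $S^\bullet=S$ if $S$ is a monoid and $S^\bullet=S^I$ (external identity adjoined) otherwise; $S^{\mathsf{bar}}$ is the semigroup of transformations of $S^\bullet$ (acting on the right) consisting of right multiplications by elements of $S$ together with all constant maps on $S^\bullet$. For a pseudovariety $\mathbf{V}$, $\mathbf{V}^{\mathsf{bar}}=\llbracket S^{\mathsf{bar}}\mid S\in\mathbf{V}\rrbracket$. *)

(* Defs.v *)
From HB Require Import structures.
From mathcomp Require Import all_boot.

Set Implicit Arguments.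
Unset Strict Implicit.
Unset Printing Implicit Defensive.

Record fsemigroup := FSemigroup {
  carrier :> finType;
  sop : carrier -> carrier -> carrier;
  sopA : associative sop;
  carrier_nonempty : (0 < #|carrier|)%N }.

Definition is_hom (S T : fsemigroup) (f : S -> T) : Prop :=
  forall x y : S, f (sop x y) = sop (f x) (f y).

Definition divides_sub (S T : fsemigroup) : Prop :=
  exists f : S -> T, is_hom f /\ injective f.

Definition hom_image (S T : fsemigroup) : Prop :=
  exists f : T -> S, is_hom f /\ (forall y : S, exists x : T, f x = y).

Section Prod.
Variables S T : fsemigroup.
Definition prod_op (x y : S * T) : S * T := (sop x.1 y.1, sop x.2 y.2).
Lemma prod_opA : associative prod_op.
Proof. by move=> [a b] [c d] [e f]; rewrite /prod_op /= !sopA. Qed.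
Lemma prod_nonempty : (0 < #|{: S * T}|)%N.
Proof. by rewrite card_prod muln_gt0 !carrier_nonempty. Qed.
Definition prod_sg : fsemigroup := FSemigroup prod_opA prod_nonempty.
End Prod.

Definition unit_op (x y : unit) : unit := tt.
Lemma unit_opA : associative unit_op. Proof. by []. Qed.
Lemma unit_nonempty : (0 < #|{: unit}|)%N. Proof. by rewrite card_unit. Qed.
Definition trivial_sg : fsemigroup := FSemigroup unit_opA unit_nonempty.

Definition sgclass := fsemigroup -> Prop.

Definition csub (V W : sgclass) : Prop := forall S, V S -> W S.
Definition ceq (V W : sgclass) : Prop := csub V W /\ csub W V.

(* closed under finite direct products (the empty product being the
   trivial semigroup), subsemigroups and homomorphic images *)
Definition pseudovariety (V : sgclass) : Prop :=
  [/\ V trivial_sg,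
      (forall S T, V S -> V T -> V (prod_sg S T)),
      (forall S T, divides_sub S T -> V T -> V S) &
      (forall S T, hom_image S T -> V T -> V S)].

Definition gen (K : sgclass) : sgclass :=
  fun S => forall V, pseudovariety V -> csub K V -> V S.

Definition gen1 (S : fsemigroup) : sgclass := gen (fun T => T = S).

Definition cjoin (I : Type) (F : I -> sgclass) : sgclass :=
  gen (fun S => exists i, F i S).

Definition RZ : sgclass := fun S => forall x y : S, sop x y = y.

Definition nontrivial (V : sgclass) : Prop :=
  exists S, V S /\ (1 < #|S|)%N.

Definition monoidb (S : fsemigroup) : bool :=
  [exists e : S, [forall x : S, (sop e x == x) && (sop x e == x)]].

(* S^bullet: S itself if S is a monoid, else S with an external identity
   adjoined (None plays the role of I) *)
Definition Sdot (S : fsemigroup) : finType :=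
  if monoidb S then (S : finType) else Finite.clone (option S) _.

Definition ract (S : fsemigroup) : Sdot S -> S -> Sdot S :=
  match monoidb S as b
    return (if b then (S : finType) else Finite.clone (option S) _) -> S ->
           (if b then (S : finType) else Finite.clone (option S) _) with
  | true => fun x s => sop x s
  | false => fun x s => match x with None => Some s | Some y => Some (sop y s) end
  end.

Lemma ractA (S : fsemigroup) (x : Sdot S) (s t : S) :
  ract (ract x s) t = ract x (sop s t).
Proof.
move: x; rewrite /Sdot /ract; case: (monoidb S) => x; first by rewrite sopA.
by case: x => [y|] //=; rewrite sopA.
Qed.

Definition is_bar (S : fsemigroup) (f : {ffun Sdot S -> Sdot S}) : bool :=
  [exists s : S, f == [ffun x => ract x s]] ||
  [exists y : Sdot S, f == [ffun _ => y]].

(* composition, maps acting on the right: x (f g) = (x f) g *)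
Definition rcomp (S : fsemigroup) (f g : {ffun Sdot S -> Sdot S}) :
  {ffun Sdot S -> Sdot S} := [ffun x => g (f x)].

Lemma is_bar_comp (S : fsemigroup) (f g : {ffun Sdot S -> Sdot S}) :
  is_bar f -> is_bar g -> is_bar (rcomp f g).
Proof.
move=> /orP[/existsP[s /eqP->]|/existsP[y /eqP->]]
       /orP[/existsP[t /eqP->]|/existsP[z /eqP->]].
- apply/orP; left; apply/existsP; exists (sop s t); apply/eqP/ffunP=> x.
  by rewrite !ffunE ractA.
- apply/orP; right; apply/existsP; exists z; apply/eqP/ffunP=> x.
  by rewrite !ffunE.
- apply/orP; right; apply/existsP; exists (ract y t); apply/eqP/ffunP=> x.
  by rewrite !ffunE.
- apply/orP; right; apply/existsP; exists z; apply/eqP/ffunP=> x.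
  by rewrite !ffunE.
Qed.

Definition bar_type (S : fsemigroup) : finType :=
  Finite.clone {f : {ffun Sdot S -> Sdot S} | is_bar f} _.

Definition bar_op (S : fsemigroup) (f g : bar_type S) : bar_type S :=
  exist _ (rcomp (sval f) (sval g)) (is_bar_comp (svalP f) (svalP g)).

Lemma bar_opA (S : fsemigroup) : associative (@bar_op S).
Proof.
move=> f g h; apply: val_inj; apply/ffunP=> x.
by rewrite /= /rcomp !ffunE.
Qed.

Lemma bar_nonempty (S : fsemigroup) : (0 < #|bar_type S|)%N.
Proof.
have /card_gt0P[s _] := carrier_nonempty S.
have Hb : is_bar [ffun x : Sdot S => ract x s].
  by apply/orP; left; apply/existsP; exists s.
by apply/card_gt0P; exists (exist (fun f => is_bar f) _ Hb).
Qed.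

Definition bar (S : fsemigroup) : fsemigroup :=
  FSemigroup (@bar_opA S) (bar_nonempty S).

Definition barV (V : sgclass) : sgclass :=
  gen (fun T => exists S, V S /\ T = bar S).

(* Main.v *)
Require Import Defs.
From mathcomp Require Import all_boot.
Set Implicit Arguments. Unset Strict Implicit. Unset Printing Implicit Defensive.

Definition isid (S : fsemigroup) (e : S) : Prop := forall x : S, sop e x = x /\ sop x e = x.

Definition pt (S : fsemigroup) : S := xchoose (elimT card_gt0P (carrier_nonempty S)).

Definition emb (S : fsemigroup) : S -> Sdot S.
rewrite /Sdot; case: (monoidb S) => s; [exact s | exact (Some s)].
Defined.

Definition one (S : fsemigroup) : Sdot S.
rewrite /Sdot; case: (monoidb S).
- exact (odflt (pt S) [pick e | [forall x : S, (sop e x == x) && (sop x e == x)]]).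
- exact None.
Defined.

Lemma emb_inj (S : fsemigroup) : injective (@emb S).
Proof.
rewrite /emb /Sdot; case: (monoidb S) => x y //= [] //.
Qed.

Lemma ract_emb (S : fsemigroup) (x s : S) : ract (emb x) s = emb (sop x s).
Proof. by rewrite /emb /ract /Sdot; case: (monoidb S). Qed.

Lemma ract_one (S : fsemigroup) (s : S) : ract (one S) s = emb s.
Proof.
rewrite /one /emb /ract /Sdot /monoidb.
case E: [exists _, _] => //=.
case: pickP => [e /forallP He|H] /=.
  by have /andP[/eqP -> _] := He s.
by move/existsP: E => [e He]; have := H e; rewrite He.
Qed.

Lemma Sdot_cover (S : fsemigroup) (y : Sdot S) : y = one S \/ exists x, y = emb x.
Proof.
move: y; rewrite /one /emb /Sdot; case: (monoidb S) => y.
  by right; exists y.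
by case: y => [x|]; [right; exists x | left].
Qed.

Lemma one_emb (S : fsemigroup) (t : S) : one S = emb t -> isid t.
Proof.
rewrite /one /emb /Sdot /monoidb.
case E: [exists _, _] => //=.
case: pickP => [e /forallP He|H] /=.
  move=> <- x.
  by have /andP[/eqP -> /eqP ->] := He x.
by move/existsP: E => [e He]; have := H e; rewrite He.
Qed.

Lemma isid_one (S : fsemigroup) (e : S) : isid e -> one S = emb e.
Proof.
move=> He.
have Hb : [forall x : S, (sop e x == x) && (sop x e == x)].
  by apply/forallP=> x; have [-> ->] := He x; rewrite !eqxx.
rewrite /one /emb /Sdot /monoidb.
have -> : [exists e : S, [forall x : S, (sop e x == x) && (sop x e == x)]].
  by apply/existsP; exists e.
case: pickP => [f /forallP Hf|H]; last by have := H e; rewrite Hb.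
simpl.
have [Hf1 _] := He f.
have /andP[_ /eqP Hf2] := Hf e.
by rewrite -Hf1 Hf2.
Qed.


Section Bar.
Variable S : fsemigroup.

Lemma is_bar_rho (s : S) : is_bar [ffun x => ract x s].
Proof. by apply/orP; left; apply/existsP; exists s. Qed.
Lemma is_bar_cst (y : Sdot S) : is_bar [ffun _ : Sdot S => y].
Proof. by apply/orP; right; apply/existsP; exists y. Qed.

Definition rho (s : S) : bar S := @exist _ (@is_bar S) _ (is_bar_rho s).
Definition cst (y : Sdot S) : bar S := @exist _ (@is_bar S) _ (is_bar_cst y).

Lemma bar_eq (f g : bar S) : sval f = sval g -> f = g.
Proof.
case: f => f Hf; case: g => g Hg /= E; subst g.
by rewrite (bool_irrelevance Hf Hg).
Qed.

Lemma bar_sopE (f g : bar S) x : sval (sop f g) x = sval g (sval f x).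
Proof. by rewrite /= /rcomp ffunE. Qed.

Lemma rhoE s x : sval (rho s) x = ract x s. Proof. by rewrite /= ffunE. Qed.
Lemma cstE y x : sval (cst y) x = y. Proof. by rewrite /= ffunE. Qed.

Lemma bar_cases (f : bar S) : (exists s, f = rho s) \/ (exists y, f = cst y).
Proof.
case: f => f Hf; case/orP: (Hf) => [/existsP[s /eqP E]|/existsP[y /eqP E]].
  by left; exists s; apply: bar_eq.
by right; exists y; apply: bar_eq.
Qed.

Definition mk (f : {ffun Sdot S -> Sdot S}) : bar S :=
  if insub f is Some g then g else cst (one S).

Lemma mkE f : is_bar f -> sval (mk f) = f.
Proof. by move=> Hf; rewrite /mk insubT. Qed.

Lemma rho_mul s t : sop (rho s) (rho t) = rho (sop s t).
Proof. by apply: bar_eq; apply/ffunP=> x; rewrite bar_sopE !rhoE ractA. Qed.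
Lemma cst_mul_rho y t : sop (cst y) (rho t) = cst (ract y t).
Proof. by apply: bar_eq; apply/ffunP=> x; rewrite bar_sopE !rhoE !cstE. Qed.
Lemma mul_cst f y : sop f (cst y) = cst y.
Proof. by apply: bar_eq; apply/ffunP=> x; rewrite bar_sopE !cstE. Qed.

End Bar.


Lemma gen_pv K : pseudovariety (gen K).
Proof.
split.
- by move=> V [].
- by move=> S T HS HT V pV HK; case: (pV) => _ Hp _ _; apply: Hp; [apply: HS|apply: HT].
- by move=> S T Hd HT V pV HK; case: (pV) => _ _ Hs _; apply: Hs Hd _; apply: HT.
- by move=> S T Hd HT V pV HK; case: (pV) => _ _ _ Hh; apply: Hh Hd _; apply: HT.
Qed.

Lemma gen_incl K : csub K (gen K).
Proof. by move=> S HS V _ HK; apply: HK. Qed.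

Lemma gen_min K V : pseudovariety V -> csub K V -> csub (gen K) V.
Proof. by move=> pV HK S HS; apply: HS. Qed.

Lemma pv_sub V S T : pseudovariety V -> divides_sub S T -> V T -> V S.
Proof. by case=> _ _ H _; apply: H. Qed.
Lemma pv_hom V S T : pseudovariety V -> hom_image S T -> V T -> V S.
Proof. by case=> _ _ _ H; apply: H. Qed.
Lemma pv_prod V S T : pseudovariety V -> V S -> V T -> V (prod_sg S T).
Proof. by case=> _ H _ _; apply: H. Qed.

Lemma pv_single V (S : fsemigroup) : pseudovariety V -> (forall x y : S, x = y) -> V S.
Proof.
move=> pV Hs; apply: (pv_hom (T:=trivial_sg)) => //; last by case: pV.
by exists (fun _ => pt S); split=> [x y|y]; [apply: Hs | exists tt; apply: Hs].
Qed.

Section Div.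
Variables (T : fsemigroup) (P : pred T).
Hypothesis PM : forall x y, P x -> P y -> P (sop x y).
Hypothesis Pne : exists x, P x.

Definition subT := {x : T | P x}.
Definition sub_op (x y : subT) : subT := @exist _ (fun z => P z) _ (PM (svalP x) (svalP y)).
Lemma sub_opA : associative sub_op.
Proof.
move=> x y z; apply: val_inj => /=; exact: sopA.
Qed.
Lemma sub_ne : (0 < #|{: subT}|)%N.
Proof. by case: Pne => x Px; apply/card_gt0P; exists (@exist _ (fun z => P z) x Px). Qed.
Definition sub_sg : fsemigroup := FSemigroup sub_opA sub_ne.
End Div.

Lemma div_lemma V (S T : fsemigroup) (P : pred T) (h : T -> S) :
  pseudovariety V ->
  (forall x y, P x -> P y -> P (sop x y)) ->
  (forall x y, P x -> P y -> h (sop x y) = sop (h x) (h y)) ->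
  (forall s, exists x, P x /\ h x = s) -> V T -> V S.
Proof.
move=> pV PM hM hS VT.
have Pne : exists x, P x by case: (hS (pt S)) => x [Px _]; exists x.
pose U := sub_sg PM Pne.
have VU : V U.
  apply: (pv_sub pV) VT; exists (fun x : U => sval x); split.
  - by move=> x y.
  - exact: val_inj.
apply: (pv_hom pV) VU; exists (fun x : U => h (sval x)); split.
- by move=> [x Px] [y Py]; rewrite /= hM.
- move=> s; case: (hS s) => x [Px <-]; by exists (@exist _ (fun z => P z) x Px).
Qed.


Lemma G_lemma V (S U : fsemigroup) (Y : finType) (app : U -> Y -> Y)
  (psi : Sdot S -> Y) (iota : S -> U) (c : Sdot S -> U) :
  pseudovariety V ->
  (forall u v y, app (sop u v) y = app v (app u y)) -> injective psi ->
  is_hom iota ->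
  (forall s x, app (iota s) (psi x) = psi (ract x s)) ->
  (forall x y, app (c x) y = psi x) ->
  (forall x s, sop (c x) (iota s) = c (ract x s)) ->
  (forall s x, sop (iota s) (c x) = c x) ->
  (forall x y, sop (c x) (c y) = c y) -> V U -> V (bar S).
Proof.
move=> pV appM psi_inj iotaM appI appC cI Ic cc VU.
pose psinv y := odflt (one S) [pick x | psi x == y].
have psinvK x : psinv (psi x) = x.
  rewrite /psinv; case: pickP => [x' /eqP /psi_inj -> //|H].
  by have := H x; rewrite eqxx.
pose P u := [exists s, u == iota s] || [exists x, u == c x].
pose h u := mk [ffun x => psinv (app u (psi x))].
have hI s : h (iota s) = rho s.
  apply: bar_eq; rewrite mkE /=; first by apply: eq_ffun => x; rewrite appI psinvK.
  by apply/orP; left; apply/existsP; exists s; apply/eqP; apply: eq_ffun => x; rewrite appI psinvK.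
have hC y : h (c y) = cst y.
  apply: bar_eq; rewrite mkE /=; first by apply: eq_ffun => x; rewrite appC psinvK.
  by apply/orP; right; apply/existsP; exists y; apply/eqP; apply: eq_ffun => x; rewrite appC psinvK.
have Pc u : P u -> (exists s, u = iota s) \/ (exists y, u = c y).
  by case/orP=> [/existsP[s /eqP ->]|/existsP[y /eqP ->]]; [left; exists s| right; exists y].
have PI s : P (iota s) by apply/orP; left; apply/existsP; exists s.
have PC y : P (c y) by apply/orP; right; apply/existsP; exists y.
apply: (div_lemma (P := P) (h := h)) VU => //.
- move=> x y /Pc[[s ->]|[a ->]] /Pc[[t ->]|[b ->]].
  + by rewrite -iotaM.
  + by rewrite Ic.
  + by rewrite cI.
  + by rewrite cc.
- move=> x y /Pc[[s ->]|[a ->]] /Pc[[t ->]|[b ->]].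
  + by rewrite -iotaM !hI rho_mul.
  + by rewrite Ic !hC mul_cst.
  + by rewrite cI hI !hC cst_mul_rho.
  + by rewrite cc !hC mul_cst.
- move=> f; case: (bar_cases f) => [[s ->]|[y ->]].
  + by exists (iota s).
  + by exists (c y).
Qed.


Lemma bar_sub V S T : pseudovariety V -> divides_sub S T -> V (bar T) -> V (bar S).
Proof.
move=> pV [f [fM finj]].
pose psi (y : Sdot S) : Sdot T :=
  if [pick x | y == emb x] is Some x then emb (f x) else one T.
have psiE x : psi (emb x) = emb (f x).
  rewrite /psi; case: pickP => [x' /eqP /emb_inj -> //|H].
  by have := H x; rewrite eqxx.
have psiO : (forall x, one S <> emb x) -> psi (one S) = one T.
  move=> Hn; rewrite /psi; case: pickP => [x' /eqP E|//].
  by case: (Hn x').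
have fid x : isid (f x) -> isid x.
  move=> H t; case: (H (f t)) => H1 H2.
  by split; apply: finj; rewrite fM.
have psiA s x : ract (psi x) (f s) = psi (ract x s).
  case: (Sdot_cover x) => [->|[x' ->]].
    case: (boolP [exists x', one S == emb x']) => [/existsP[x' /eqP E]|Hn].
      by rewrite E psiE ract_emb ract_emb psiE fM.
    have Hn' : forall x, one S <> emb x.
      by move=> x0 E; move/negP: Hn; apply; apply/existsP; exists x0; rewrite E.
    by rewrite psiO // ract_one ract_one psiE.
  by rewrite psiE !ract_emb psiE fM.
have psi_inj : injective psi.
  have key : forall y, psi (one S) = psi (emb y) -> one S = emb y \/ exists x, one S = emb x.
    move=> y; case: (boolP [exists x', one S == emb x']) => [/existsP[x' /eqP E]|Hn].
      by right; exists x'.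
    have Hn' : forall x, one S <> emb x.
      by move=> x0 E; move/negP: Hn; apply; apply/existsP; exists x0; rewrite E.
    rewrite psiO // psiE => /esym E.
    by case: (Hn' y); apply: isid_one; apply: fid; apply: one_emb.
  move=> x y; case: (Sdot_cover x) => [Ex|[x' Ex]]; case: (Sdot_cover y) => [Ey|[y' Ey]]; rewrite Ex Ey //.
  - move=> E; case: (key y' E) => [//|[z Ez]].
    by move: E; rewrite Ez !psiE => /emb_inj /finj ->.
  - move=> E; case: (key x' (esym E)) => [//|[z Ez]].
    by move: E; rewrite Ez !psiE => /emb_inj /finj ->.
  - by rewrite !psiE => /emb_inj /finj ->.
apply: (@G_lemma V S (bar T) (Sdot T) (fun u y => sval u y) psi
          (fun s => rho (f s)) (fun x => cst (psi x))) => //.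
- by move=> u v y; rewrite bar_sopE.
- by move=> x y; rewrite fM rho_mul.
- by move=> s x; rewrite rhoE psiA.
- by move=> x y; rewrite cstE.
- by move=> x s; rewrite cst_mul_rho psiA.
- by move=> s x; rewrite mul_cst.
- by move=> x y; rewrite mul_cst.
Qed.


Lemma prod_sopE (S T : fsemigroup) (a c : S) (b d : T) :
  @sop (prod_sg S T) (a, b) (c, d) = (sop a c, sop b d).
Proof. by []. Qed.
Lemma prod_sop1 (S T : fsemigroup) (x y : prod_sg S T) : (sop x y).1 = sop x.1 y.1.
Proof. by []. Qed.
Lemma prod_sop2 (S T : fsemigroup) (x y : prod_sg S T) : (sop x y).2 = sop x.2 y.2.
Proof. by []. Qed.

Lemma bar_prod V S1 S2 : pseudovariety V -> V (bar S1) -> V (bar S2) ->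
  V (bar (prod_sg S1 S2)).
Proof.
move=> pV V1 V2.
pose S := prod_sg S1 S2.
pose psi (y : Sdot S) : Sdot S1 * Sdot S2 :=
  if [pick p | y == emb p] is Some p then (emb p.1, emb p.2) else (one S1, one S2).
have psiE p : psi (emb p) = (emb p.1, emb p.2).
  rewrite /psi; case: pickP => [x' /eqP /emb_inj -> //|H].
  by have := H p; rewrite eqxx.
have psiO : (forall x, one S <> emb x) -> psi (one S) = (one S1, one S2).
  move=> Hn; rewrite /psi; case: pickP => [x' /eqP E|//].
  by case: (Hn x').
have psiA (s : S) x : (ract (psi x).1 s.1, ract (psi x).2 s.2) = psi (ract x s).
  case: (Sdot_cover x) => [->|[x' ->]].
    case: (boolP [exists x', one S == emb x']) => [/existsP[x' /eqP E]|Hn].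
      by rewrite E psiE ract_emb psiE /= !ract_emb.
    have Hn' : forall x, one S <> emb x.
      by move=> x0 E; move/negP: Hn; apply; apply/existsP; exists x0; rewrite E.
    by rewrite psiO // ract_one psiE /= !ract_one.
  by rewrite psiE ract_emb psiE /= !ract_emb.
have psi_inj : injective psi.
  have key : forall y, psi (one S) = psi (emb y) -> one S = emb y \/ exists x, one S = emb x.
    move=> y; case: (boolP [exists x', one S == emb x']) => [/existsP[x' /eqP E]|Hn].
      by right; exists x'.
    have Hn' : forall x, one S <> emb x.
      by move=> x0 E; move/negP: Hn; apply; apply/existsP; exists x0; rewrite E.
    rewrite psiO // psiE => [[E1 E2]].
    case: (Hn' y); apply: isid_one => x.
    have [H1 H2] := one_emb E1 x.1; have [H3 H4] := one_emb E2 x.2.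
    by case: x H1 H2 H3 H4 => a b /= H1 H2 H3 H4; rewrite /sop /= /prod_op /= H1 H2 H3 H4.
  move=> x y; case: (Sdot_cover x) => [Ex|[x' Ex]]; case: (Sdot_cover y) => [Ey|[y' Ey]]; rewrite Ex Ey //.
  - move=> E; case: (key y' E) => [//|[z Ez]].
    move: E; rewrite Ez !psiE => [[/emb_inj E1 /emb_inj E2]].
    by congr emb; clear -E1 E2; case: z y' E1 E2 => a b [c d] /= -> ->.
  - move=> E; case: (key x' (esym E)) => [//|[z Ez]].
    move: E; rewrite Ez !psiE => [[/emb_inj E1 /emb_inj E2]].
    by congr emb; clear -E1 E2; case: z x' E1 E2 => a b [c d] /= -> ->.
  - rewrite !psiE => [[/emb_inj E1 /emb_inj E2]].
    by congr emb; clear -E1 E2; case: x' y' E1 E2 => a b [c d] /= -> ->.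
pose U := prod_sg (bar S1) (bar S2).
have := (@G_lemma V S U (Sdot S1 * Sdot S2)%type
          (fun u y => (sval u.1 y.1, sval u.2 y.2)) psi
          (fun s => (rho s.1, rho s.2) : U)
          (fun x => (cst (psi x).1, cst (psi x).2) : U) pV).
apply=> //.
- by move=> u v y; rewrite /= !bar_sopE.
- by move=> x y; rewrite prod_sopE prod_sop1 prod_sop2 !rho_mul.
- by move=> s x; rewrite !rhoE psiA.
- by move=> x y; rewrite !cstE; case: (psi x).
- by move=> x s; rewrite prod_sopE !cst_mul_rho -psiA.
- by move=> s x; rewrite prod_sopE !mul_cst.
- by move=> x y; rewrite prod_sopE !mul_cst.
- exact: pv_prod.
Qed.


Lemma bar_hom V S T : pseudovariety V -> hom_image S T -> V (bar T) -> V (bar S).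
Proof.
move=> pV [f [fM fsurj]].
pose phi (y : Sdot T) : Sdot S :=
  if [pick x | y == emb x] is Some x then emb (f x) else one S.
have phiE x : phi (emb x) = emb (f x).
  rewrite /phi; case: pickP => [x' /eqP /emb_inj -> //|H].
  by have := H x; rewrite eqxx.
have phiO : (forall x, one T <> emb x) -> phi (one T) = one S.
  move=> Hn; rewrite /phi; case: pickP => [x' /eqP E|//].
  by case: (Hn x').
have fid x : isid x -> isid (f x).
  move=> H s; case: (fsurj s) => t <-; case: (H t) => H1 H2.
  by rewrite -!fM H1 H2.
have phiA t x : ract (phi x) (f t) = phi (ract x t).
  case: (Sdot_cover x) => [->|[x' ->]].
    case: (boolP [exists x', one T == emb x']) => [/existsP[x' /eqP E]|Hn].
      by rewrite E phiE ract_emb ract_emb phiE fM.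
    have Hn' : forall x, one T <> emb x.
      by move=> x0 E; move/negP: Hn; apply; apply/existsP; exists x0; rewrite E.
    by rewrite phiO // ract_one ract_one phiE.
  by rewrite phiE !ract_emb phiE fM.
have phi_surj z : exists y, phi y = z.
  case: (Sdot_cover z) => [->|[s ->]]; last first.
    by case: (fsurj s) => t <-; exists (emb t); rewrite phiE.
  case: (boolP [exists x', one S == emb x']) => [/existsP[s /eqP ->]|Hn].
    by case: (fsurj s) => t <-; exists (emb t); rewrite phiE.
  exists (one T); apply: phiO => t Et.
  move/negP: Hn; apply; apply/existsP; exists (f t).
  by apply/eqP; apply: isid_one; apply: fid; apply: one_emb.
pose sigma (z : Sdot S) : Sdot T := odflt (one T) [pick y | phi y == z].
have sigmaK z : phi (sigma z) = z.
  rewrite /sigma; case: pickP => [y /eqP //|H].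
  by case: (phi_surj z) => y Ey; have := H y; rewrite Ey eqxx.
pose h (g : bar T) : bar S := mk [ffun z => phi (sval g (sigma z))].
have hR t : h (rho t) = rho (f t).
  apply: bar_eq; rewrite mkE /=; first by apply: eq_ffun => z; rewrite ?ffunE -phiA sigmaK.
  by apply/orP; left; apply/existsP; exists (f t); apply/eqP; apply: eq_ffun => z; rewrite ?ffunE -phiA sigmaK.
have hC y : h (cst y) = cst (phi y).
  apply: bar_eq; rewrite mkE /=; first by apply: eq_ffun => z; rewrite ?ffunE.
  by apply/orP; right; apply/existsP; exists (phi y); apply/eqP; apply: eq_ffun => z; rewrite ?ffunE.
apply: (pv_hom pV) => //; exists h; split.
- move=> g g'.
  case: (bar_cases g) => [[s ->]|[a ->]]; case: (bar_cases g') => [[t ->]|[b ->]].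
  + by rewrite rho_mul !hR fM rho_mul.
  + by rewrite mul_cst !hC mul_cst.
  + by rewrite cst_mul_rho hR !hC cst_mul_rho phiA.
  + by rewrite mul_cst !hC mul_cst.
- move=> g; case: (bar_cases g) => [[s ->]|[z ->]].
  + by case: (fsurj s) => t <-; exists (rho t).
  + by exists (cst (sigma z)); rewrite hC sigmaK.
Qed.

Lemma bar_triv V : pseudovariety V -> V (bar trivial_sg).
Proof.
move=> pV; apply: pv_single => //.
have H1 : isid (tt : trivial_sg) by move=> [].
have Hd : forall y : Sdot trivial_sg, y = emb (tt : trivial_sg).
  move=> y; case: (Sdot_cover y) => [->|[[] ->]] //; exact: isid_one.
move=> f g; apply: bar_eq; apply/ffunP=> y.
by rewrite (Hd (sval f y)) (Hd (sval g y)).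
Qed.


Section Pow.
Variables (I : finType) (S : fsemigroup).
Definition pow_op (f g : {ffun I -> S}) : {ffun I -> S} := [ffun i => sop (f i) (g i)].
Lemma pow_opA : associative pow_op.
Proof. by move=> f g h; apply/ffunP=> i; rewrite !ffunE sopA. Qed.
Lemma pow_ne : (0 < #|{: {ffun I -> S}}|)%N.
Proof. by apply/card_gt0P; exists [ffun _ => pt S]. Qed.
Definition pow_sg : fsemigroup := FSemigroup pow_opA pow_ne.
Lemma pow_sopE (f g : pow_sg) i : (sop f g : {ffun I -> S}) i = sop (f i) (g i).
Proof. by rewrite /= /pow_op ffunE. Qed.
End Pow.

Lemma pv_pow V (S : fsemigroup) : pseudovariety V -> V S -> forall I : finType, V (pow_sg I S).
Proof.
move=> pV VS I.
move: {2}#|I| (erefl #|I|) => n; elim: n I => [|n IH] I HI.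
  apply: pv_single => // f g; apply/ffunP=> i.
  by have := card0_eq HI i.
have /card_gt0P [i0 _] : (0 < #|I|)%N by rewrite HI.
pose I' := {i : I | i != i0}.
have HI' : #|{: I'}| = n.
  by rewrite card_sig cardC1 HI.
have := pv_prod pV VS (IH _ HI').
apply: (pv_hom pV).
exists (fun p : prod_sg S (pow_sg I' S) =>
  ([ffun i => if insub i is Some j then (p.2 : {ffun I' -> S}) j else p.1] : pow_sg I S)).
split.
- move=> [a g] [b g']; apply/ffunP=> i.
  rewrite pow_sopE !ffunE /=.
  by case: insubP => [j _ _|_] //; rewrite pow_sopE.
- move=> g; exists (g i0, [ffun j : I' => g (val j)] : pow_sg I' S).
  apply/ffunP=> i; rewrite !ffunE /=.
  case: insubP => [j _ <-|]; first by rewrite ffunE.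
  by rewrite negbK => /eqP ->.
Qed.


Lemma cst_mul S (y : Sdot S) (f : bar S) : sop (cst y) f = cst (sval f y).
Proof. by apply: bar_eq; apply/ffunP=> x; rewrite bar_sopE !cstE. Qed.

Lemma bar_bar V S0 : pseudovariety V -> V (bar S0) -> V (bar (bar S0)).
Proof.
move=> pV VB.
pose B := bar S0.
pose Y := {ffun Sdot S0 -> Sdot S0}.
pose psi (g : Sdot B) : Y :=
  if [pick f | g == emb f] is Some f then sval f else [ffun u => u].
have psiE f : psi (emb f) = sval f.
  rewrite /psi; case: pickP => [x' /eqP /emb_inj -> //|H].
  by have := H f; rewrite eqxx.
have psiO : (forall x, one B <> emb x) -> psi (one B) = [ffun u => u].
  move=> Hn; rewrite /psi; case: pickP => [x' /eqP E|//].
  by case: (Hn x').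
pose app (t : pow_sg (Sdot S0) B) (y : Y) : Y := [ffun u => sval (t u) (y u)].
have psiA (f : B) x : app [ffun _ => f] (psi x) = psi (ract x f).
  case: (Sdot_cover x) => [->|[x' ->]].
    case: (boolP [exists x', one B == emb x']) => [/existsP[x' /eqP E]|Hn].
      rewrite E psiE ract_emb psiE; apply/ffunP=> u.
      by rewrite !ffunE.
    have Hn' : forall x, one B <> emb x.
      by move=> x0 E; move/negP: Hn; apply; apply/existsP; exists x0; rewrite E.
    by rewrite psiO // ract_one psiE; apply/ffunP=> u; rewrite !ffunE.
  by rewrite psiE ract_emb psiE; apply/ffunP=> u; rewrite !ffunE.
have psi_inj : injective psi.
  have key : forall y, psi (one B) = psi (emb y) -> one B = emb y \/ exists x, one B = emb x.
    move=> y; case: (boolP [exists x', one B == emb x']) => [/existsP[x' /eqP E]|Hn].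
      by right; exists x'.
    have Hn' : forall x, one B <> emb x.
      by move=> x0 E; move/negP: Hn; apply; apply/existsP; exists x0; rewrite E.
    rewrite psiO // psiE => E.
    case: (Hn' y); apply: isid_one => g; split; apply: bar_eq; apply/ffunP=> u;
      by rewrite bar_sopE -E ffunE.
  move=> x y; case: (Sdot_cover x) => [Ex|[x' Ex]]; case: (Sdot_cover y) => [Ey|[y' Ey]]; rewrite Ex Ey //.
  - move=> E; case: (key y' E) => [//|[z Ez]].
    by move: E; rewrite Ez !psiE => /bar_eq ->.
  - move=> E; case: (key x' (esym E)) => [//|[z Ez]].
    by move: E; rewrite Ez !psiE => /bar_eq ->.
  - by rewrite !psiE => /bar_eq ->.
apply: (@G_lemma V B (pow_sg (Sdot S0) B) Y app psi
          (fun f => [ffun _ => f] : pow_sg (Sdot S0) B)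
          (fun g => [ffun u => cst (psi g u)] : pow_sg (Sdot S0) B)) => //.
- by move=> u v y; apply/ffunP=> i; rewrite !ffunE.
- by move=> f g; apply/ffunP=> i; rewrite ?pow_sopE !ffunE.
- by move=> x y; apply/ffunP=> i; rewrite !ffunE ?cstE.
- move=> x s; apply/ffunP=> i; rewrite ?pow_sopE !ffunE cst_mul.
  by rewrite -psiA !ffunE.
- by move=> s x; apply/ffunP=> i; rewrite pow_sopE !ffunE mul_cst.
- by move=> x y; apply/ffunP=> i; rewrite pow_sopE !ffunE mul_cst.
- exact: pv_pow.
Qed.


Definition CW (W : sgclass) : sgclass := fun T => W (bar T).

Lemma CW_pv W : pseudovariety W -> pseudovariety (CW W).
Proof.
move=> pW; split.
- exact: bar_triv.
- by move=> S T; apply: bar_prod.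
- by move=> S T Hd; apply: bar_sub.
- by move=> S T Hd; apply: bar_hom.
Qed.

Lemma embed_bar S : divides_sub S (bar S).
Proof.
exists (@rho S); split.
- by move=> x y; rewrite rho_mul.
- move=> x y E; apply: emb_inj.
  by rewrite -!ract_one -!rhoE E.
Qed.

Lemma barV_pv V : pseudovariety (barV V).
Proof. exact: gen_pv. Qed.

Lemma bar_in V S : V S -> barV V (bar S).
Proof. by move=> HS; apply: gen_incl; exists S. Qed.

Lemma barV_mono V W : csub V W -> csub (barV V) (barV W).
Proof.
move=> HVW; apply: gen_min; first exact: gen_pv.
by move=> T [S [HS ->]]; apply: bar_in; apply: HVW.
Qed.

Lemma barV_incl V : pseudovariety V -> csub V (barV V).
Proof.
move=> pV S HS; apply: (pv_sub (barV_pv V) (embed_bar S)).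
exact: bar_in.
Qed.

Lemma barV_closed V W : pseudovariety W -> (forall S, V S -> W (bar S)) -> csub (barV V) W.
Proof.
by move=> pW H; apply: gen_min => // T [S [HS ->]]; apply: H.
Qed.

Lemma barV_idem V : pseudovariety V -> ceq (barV (barV V)) (barV V).
Proof.
move=> pV; split; last exact: (@barV_incl (barV V) (barV_pv V)).
apply: barV_closed; first exact: barV_pv.
have: csub (barV V) (CW (barV V)).
  apply: gen_min; first exact: CW_pv (barV_pv V).
  move=> T [S [HS ->]]; rewrite /CW; apply: (@bar_bar (barV V) S); first exact: barV_pv.
  exact: bar_in.
by [].
Qed.

Lemma part_i S : ceq (barV (gen1 S)) (gen1 (bar S)).
Proof.
split.
- apply: barV_closed; first exact: gen_pv.
  have: csub (gen1 S) (CW (gen1 (bar S))).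
    apply: gen_min; first exact: CW_pv (gen_pv _).
    by move=> T ->; rewrite /CW; apply: gen_incl.
  by [].
- apply: gen_min; first exact: gen_pv.
  move=> T ->; apply: bar_in; exact: gen_incl.
Qed.

Lemma part_ii V : pseudovariety V -> nontrivial V -> csub RZ (barV V).
Proof.
move=> pV [S [HS HS2]] R HR.
have [a [b Hab]] : exists a b : S, a != b.
  case: (boolP [exists a : S, exists b : S, a != b]) => [/existsP [a /existsP [b Hab]]|H].
    by exists a, b.
  have : (#|S| <= 1)%N.
    rewrite -(card1 (pt S)); apply: subset_leq_card; apply/subsetP=> y _.
    rewrite inE; apply/negPn/negP=> Hy; move/negP: H; apply.
    by apply/existsP; exists y; apply/existsP; exists (pt S).
  by rewrite leqNgt HS2.
have Vp : barV V (pow_sg R (bar S)).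
  apply: (pv_pow (barV_pv V)); exact: bar_in.
apply: (pv_sub (barV_pv V)) Vp.
exists (fun r : R => [ffun u : R => cst (if u == r then emb a else emb b)] : pow_sg R (bar S)).
split.
- move=> x y; apply/ffunP=> i; rewrite pow_sopE !ffunE mul_cst HR.
  by [].
- move=> x y /ffunP /(_ x); rewrite !ffunE eqxx.
  case: eqP => // _ E.
  have := congr1 (fun f : bar S => sval f (one S)) E; rewrite /= !ffunE.
  by move/emb_inj/eqP; rewrite (negbTE Hab).
Qed.


Lemma directed (I : Type) (F : I -> sgclass) : inhabited I ->
  (forall i, pseudovariety (F i)) ->
  (forall i j, exists k, csub (F i) (F k) /\ csub (F j) (F k)) ->
  ceq (barV (cjoin F)) (cjoin (fun i => barV (F i))).
Proof.
move=> [i0] pF dir.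
have pU : pseudovariety (fun S => exists i, F i S).
  split.
  - by exists i0; case: (pF i0).
  - move=> S T [i Hi] [j Hj]; case: (dir i j) => k [Hik Hjk].
    by exists k; apply: pv_prod (pF k) (Hik _ Hi) (Hjk _ Hj).
  - by move=> S T Hd [i Hi]; exists i; apply: pv_sub (pF i) Hd Hi.
  - by move=> S T Hd [i Hi]; exists i; apply: pv_hom (pF i) Hd Hi.
split.
- apply: barV_closed; first exact: gen_pv.
  move=> S HS; have [k Hk] : exists k, F k S := HS (fun S => exists i, F i S) pU (fun S H => H).
  apply: gen_incl; exists k; exact: (@bar_in (F k) S Hk).
- apply: gen_min; first exact: gen_pv.
  move=> T [i Hi]; apply: (barV_mono (V := F i)) Hi.
  by move=> S HS; apply: gen_incl; exists i.
Qed.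

Theorem proposition2p5 :
  (* order preserving *)
  (forall V W : sgclass, pseudovariety V -> pseudovariety W ->
     csub V W -> csub (barV V) (barV W)) /\
  (* preserves directed joins *)
  (forall (I : Type) (F : I -> sgclass), inhabited I ->
     (forall i, pseudovariety (F i)) ->
     (forall i j, exists k, csub (F i) (F k) /\ csub (F j) (F k)) ->
     ceq (barV (cjoin F)) (cjoin (fun i => barV (F i)))) /\
  (* non-decreasing *)
  (forall V : sgclass, pseudovariety V -> csub V (barV V)) /\
  (* idempotent *)
  (forall V : sgclass, pseudovariety V -> ceq (barV (barV V)) (barV V)) /\
  (* (i) *)
  (forall S : fsemigroup, ceq (barV (gen1 S)) (gen1 (bar S))) /\
  (* (ii) *)
  (forall V : sgclass, pseudovariety V -> nontrivial V -> csub RZ (barV V)) /\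
  (* consequence *)
  (forall S T : fsemigroup, ceq (gen1 S) (gen1 T) ->
     ceq (gen1 (bar S)) (gen1 (bar T))).
Proof.
split; first by move=> V W _ _; apply: barV_mono.
split; first exact: directed.
split; first exact: barV_incl.
split; first exact: barV_idem.
split; first exact: part_i.
split; first exact: part_ii.
move=> S T [H1 H2]; have [A1 A2] := part_i S; have [B1 B2] := part_i T.
split=> R HR.
- by apply: B1; apply: (barV_mono H1); apply: A2.
- by apply: A1; apply: (barV_mono H2); apply: B2.
Qed.
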